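(* Let $a<b$ and let $H\subseteq\mathbb{R}^2$ be a functionally connected set such that $[a,b]\subseteq\mathrm{pr}_1[H]$. Let $h\colon[a,b]\to\mathbb{R}$ be a continuous function whose graph is included in $H$, and let $u,v\in\mathbb{R}$ be such that $(a,u),(b,v)\in H$. Then for every open interval $J$ such that $u,v\in J$ and $\mathrm{rng}(h)\subseteq J$, there exists a continuous function $g\colon[a,b]\to J$ whose graph is included in $H$, with $g(a)=u$ and $g(b)=v$.
   Context: $\mathrm{pr}_1[H]$ is the projection of $H$ to the first coordinate. A set $H\subseteq\mathbb{R}^2$ is functionally connected if for any two points $(x_1,y_1),(x_2,y_2)\in H$ with $x_1\neq x_2$ there exists a continuous function $h$ on the closed interval with endpoints $x_1,x_2$ such that $h(x_1)=y_1$, $h(x_2)=y_2$, and the graph of $h$ is included in $H$. *)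

(* Defs.v *)
From Stdlib Require Import Reals.
From Coquelicot Require Import Rbar.
Open Scope R_scope.

Definition continuous_on_cc (h : R -> R) (a b : R) : Prop :=
  forall x, a <= x <= b ->
    forall eps, 0 < eps -> exists delta, 0 < delta /\
      forall y, a <= y <= b -> Rabs (y - x) < delta -> Rabs (h y - h x) < eps.

Definition graph_in (h : R -> R) (a b : R) (H : R -> R -> Prop) : Prop :=
  forall x, a <= x <= b -> H x (h x).

Definition functionally_connected (H : R -> R -> Prop) : Prop :=
  forall x1 y1 x2 y2, H x1 y1 -> H x2 y2 -> x1 <> x2 ->
    exists h : R -> R,
      continuous_on_cc h (Rmin x1 x2) (Rmax x1 x2) /\
      h x1 = y1 /\ h x2 = y2 /\
      graph_in h (Rmin x1 x2) (Rmax x1 x2) H.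

Definition pr1 (H : R -> R -> Prop) (x : R) : Prop := exists y, H x y.

Definition in_open_interval (c d : Rbar) (y : R) : Prop :=
  Rbar_lt c (Finite y) /\ Rbar_lt (Finite y) d.

(* Main.v *)
Require Import Defs.
From Stdlib Require Import Reals Lra.
From Coquelicot Require Import Rbar.
Open Scope R_scope.

Ltac dRle := repeat match goal with
  | |- context[Rle_dec ?x ?y] => destruct (Rle_dec x y)
  | H : context[Rle_dec ?x ?y] |- _ => destruct (Rle_dec x y)
  end.

Lemma Rabs_maj2_ z : - z <= Rabs z.
Proof. rewrite <- Rabs_Ropp. apply Rle_abs. Qed.

Lemma Rabs_Rmax_le x y x' y' :
  Rabs (Rmax x y - Rmax x' y') <= Rmax (Rabs (x - x')) (Rabs (y - y')).
Proof.
  pose proof (Rmax_l (Rabs (x - x')) (Rabs (y - y'))).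
  pose proof (Rmax_r (Rabs (x - x')) (Rabs (y - y'))).
  pose proof (Rle_abs (x - x')). pose proof (Rabs_maj2_ (x - x')).
  pose proof (Rle_abs (y - y')). pose proof (Rabs_maj2_ (y - y')).
  generalize dependent (Rmax (Rabs (x - x')) (Rabs (y - y'))); intros M.
  intros; apply Rabs_le; unfold Rmax; dRle; lra.
Qed.

Lemma Rabs_Rmin_le x y x' y' :
  Rabs (Rmin x y - Rmin x' y') <= Rmax (Rabs (x - x')) (Rabs (y - y')).
Proof.
  pose proof (Rmax_l (Rabs (x - x')) (Rabs (y - y'))).
  pose proof (Rmax_r (Rabs (x - x')) (Rabs (y - y'))).
  pose proof (Rle_abs (x - x')). pose proof (Rabs_maj2_ (x - x')).
  pose proof (Rle_abs (y - y')). pose proof (Rabs_maj2_ (y - y')).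
  generalize dependent (Rmax (Rabs (x - x')) (Rabs (y - y'))); intros M.
  intros; apply Rabs_le; unfold Rmin; dRle; lra.
Qed.

Lemma cont_max f g a b : continuous_on_cc f a b -> continuous_on_cc g a b ->
  continuous_on_cc (fun t => Rmax (f t) (g t)) a b.
Proof.
  intros Hf Hg x Hx eps He.
  destruct (Hf x Hx eps He) as [d1 [Hd1 P1]].
  destruct (Hg x Hx eps He) as [d2 [Hd2 P2]].
  exists (Rmin d1 d2); split. { apply Rmin_case; lra. }
  intros y Hy Hyx.
  assert (Hyx1 : Rabs (y - x) < d1) by (pose proof (Rmin_l d1 d2); lra).
  assert (Hyx2 : Rabs (y - x) < d2) by (pose proof (Rmin_r d1 d2); lra).
  specialize (P1 y Hy Hyx1). specialize (P2 y Hy Hyx2).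
  eapply Rle_lt_trans. apply Rabs_Rmax_le. apply Rmax_lub_lt; lra.
Qed.

Lemma cont_min f g a b : continuous_on_cc f a b -> continuous_on_cc g a b ->
  continuous_on_cc (fun t => Rmin (f t) (g t)) a b.
Proof.
  intros Hf Hg x Hx eps He.
  destruct (Hf x Hx eps He) as [d1 [Hd1 P1]].
  destruct (Hg x Hx eps He) as [d2 [Hd2 P2]].
  exists (Rmin d1 d2); split. { apply Rmin_case; lra. }
  intros y Hy Hyx.
  assert (Hyx1 : Rabs (y - x) < d1) by (pose proof (Rmin_l d1 d2); lra).
  assert (Hyx2 : Rabs (y - x) < d2) by (pose proof (Rmin_r d1 d2); lra).
  specialize (P1 y Hy Hyx1). specialize (P2 y Hy Hyx2).
  eapply Rle_lt_trans. apply Rabs_Rmin_le. apply Rmax_lub_lt; lra.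
Qed.

Lemma cont_restr f a b a' b' : continuous_on_cc f a b -> a <= a' -> b' <= b ->
  continuous_on_cc f a' b'.
Proof.
  intros Hf H1 H2 x Hx eps He.
  destruct (Hf x ltac:(lra) eps He) as [d [Hd P]].
  exists d; split; auto. intros y Hy; apply P; lra.
Qed.

Lemma cont_glue g1 g2 a m b : continuous_on_cc g1 a m -> continuous_on_cc g2 m b ->
  g1 m = g2 m -> a <= m <= b ->
  continuous_on_cc (fun t => if Rle_dec t m then g1 t else g2 t) a b.
Proof.
  intros C1 C2 E Hm x Hx eps He.
  destruct (Rtotal_order x m) as [Hl|[He'|Hg]].
  - destruct (C1 x ltac:(lra) eps He) as [d [Hd P]].
    exists (Rmin d (m - x)); split. { apply Rmin_case; lra. }
    intros y Hy Hyx. pose proof (Rmin_l d (m-x)); pose proof (Rmin_r d (m-x)).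
    assert (y < m). { unfold Rabs in Hyx; destruct Rcase_abs in Hyx; lra. }
    dRle; try lra. apply P; lra.
  - subst x.
    destruct (C1 m ltac:(lra) eps He) as [d1 [Hd1 P1]].
    destruct (C2 m ltac:(lra) eps He) as [d2 [Hd2 P2]].
    exists (Rmin d1 d2); split. { apply Rmin_case; lra. }
    intros y Hy Hyx. pose proof (Rmin_l d1 d2); pose proof (Rmin_r d1 d2).
    dRle; try lra. apply P1; lra. rewrite E. apply P2; lra.
  - destruct (C2 x ltac:(lra) eps He) as [d [Hd P]].
    exists (Rmin d (x - m)); split. { apply Rmin_case; lra. }
    intros y Hy Hyx. pose proof (Rmin_l d (x-m)); pose proof (Rmin_r d (x-m)).
    assert (y > m). { unfold Rabs in Hyx; destruct Rcase_abs in Hyx; lra. }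
    dRle; try lra. apply P; lra.
Qed.

Lemma cont_refl f a b : continuous_on_cc f a b ->
  continuous_on_cc (fun x => f (- x)) (- b) (- a).
Proof.
  intros Hf x Hx eps He.
  destruct (Hf (- x) ltac:(lra) eps He) as [d [Hd P]].
  exists d; split; auto. intros y Hy Hyx. apply P. lra.
  replace (- y - - x) with (- (y - x)) by ring. rewrite Rabs_Ropp; auto.
Qed.

Lemma Rmin_opp x y : - Rmax (- x) (- y) = Rmin x y.
Proof. unfold Rmax, Rmin; dRle; lra. Qed.
Lemma Rmax_opp x y : - Rmin (- x) (- y) = Rmax x y.
Proof. unfold Rmax, Rmin; dRle; lra. Qed.

Lemma fc_refl H : functionally_connected H ->
  functionally_connected (fun x y => H (- x) y).
Proof.
  intros hH x1 y1 x2 y2 H1 H2 Hne.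
  destruct (hH (- x1) y1 (- x2) y2 H1 H2 ltac:(lra)) as [p [Cp [E1 [E2 G]]]].
  exists (fun x => p (- x)). split; [|split; [|split]].
  - pose proof (cont_refl _ _ _ Cp) as C. rewrite Rmin_opp, Rmax_opp in C. exact C.
  - auto.
  - auto.
  - intros x Hx. apply G.
    rewrite <- (Rmin_opp x1 x2), <- (Rmax_opp x1 x2) in Hx.
    lra.
Qed.

Lemma inJ_between c d y1 y2 z : in_open_interval c d y1 -> in_open_interval c d y2 ->
  y1 <= z <= y2 -> in_open_interval c d z.
Proof.
  unfold in_open_interval; destruct c, d; simpl; intuition lra.
Qed.

Lemma inJ_open c d y : in_open_interval c d y ->
  exists e, 0 < e /\ forall z, Rabs (z - y) < e -> in_open_interval c d z.
Proof.
  unfold in_open_interval; destruct c as [c| |], d as [d| |]; simpl; intros [A B];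
  try contradiction.
  - exists (Rmin (y - c) (d - y)); split. apply Rmin_case; lra.
    intros z Hz. pose proof (Rmin_l (y - c) (d - y)); pose proof (Rmin_r (y - c) (d - y)).
    unfold Rabs in Hz; destruct Rcase_abs in Hz; lra.
  - exists (y - c); split. lra. intros z Hz.
    unfold Rabs in Hz; destruct Rcase_abs in Hz; split; auto; lra.
  - exists (d - y); split. lra. intros z Hz.
    unfold Rabs in Hz; destruct Rcase_abs in Hz; split; auto; lra.
  - exists 1; split. lra. intros; split; auto.
Qed.

Lemma P_max (P : R -> Prop) x y : P x -> P y -> P (Rmax x y).
Proof. unfold Rmax; dRle; auto. Qed.
Lemma P_min (P : R -> Prop) x y : P x -> P y -> P (Rmin x y).
Proof. unfold Rmin; dRle; auto. Qed.

Lemma step (a b : R) (H : R -> R -> Prop) (h : R -> R) (u : R) (c d : Rbar) :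
  a < b -> functionally_connected H -> continuous_on_cc h a b ->
  graph_in h a b H -> (forall x, a <= x <= b -> in_open_interval c d (h x)) ->
  H a u -> in_open_interval c d u ->
  exists G x1, x1 < b /\ a <= x1 /\ (forall t, x1 <= t <= b -> G t = h t) /\
    continuous_on_cc G a b /\ (forall x, a <= x <= b -> in_open_interval c d (G x)) /\
    graph_in G a b H /\ G a = u.
Proof.
  intros hab hH hc hg hJ hu uJ.
  destruct (Req_dec u (h a)) as [Eq|Ne].
  { exists h, a. split; [lra|split;[lra|split;[auto|split;[auto|split;[auto|split;[auto|auto]]]]]]. }
  destruct (hH a u b (h b) hu (hg b ltac:(lra)) ltac:(lra)) as [f [Cf [fa [fb Gf]]]].
  rewrite Rmin_left, Rmax_right in Cf, Gf by lra.
  destruct (inJ_open c d u uJ) as [eJ [HeJ PJ]].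
  set (e := Rabs (h a - u) / 2).
  assert (He : 0 < e) by (unfold e; assert (h a - u <> 0) as Ne2 by lra; apply Rabs_pos_lt in Ne2; lra).
  destruct (Cf a ltac:(lra) (Rmin eJ e) ltac:(apply Rmin_case; lra)) as [df [Hdf Pf]].
  destruct (hc a ltac:(lra) e He) as [dh [Hdh Ph]].
  set (x1 := a + Rmin (Rmin df dh) (b - a) / 2).
  pose proof (Rmin_l (Rmin df dh) (b - a)). pose proof (Rmin_r (Rmin df dh) (b - a)).
  pose proof (Rmin_l df dh). pose proof (Rmin_r df dh).
  pose proof (Rmin_l eJ e). pose proof (Rmin_r eJ e).
  assert (Hm : 0 < Rmin (Rmin df dh) (b - a)) by (repeat apply Rmin_case; lra).
  assert (Hx1 : a < x1 < b) by (unfold x1; lra).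
  assert (Near : forall t, a <= t <= x1 ->
     in_open_interval c d (f t) /\ Rabs (f t - u) < e /\ Rabs (h t - h a) < e).
  { intros t Ht.
    assert (Rabs (t - a) < df /\ Rabs (t - a) < dh) as [T1 T2].
    { rewrite Rabs_right by lra. unfold x1 in Ht. lra. }
    specialize (Pf t ltac:(lra) T1). specialize (Ph t ltac:(lra) T2).
    rewrite fa in Pf. split; [apply PJ; lra| split; lra]. }
  destruct (hH a u x1 (h x1) hu (hg x1 ltac:(lra)) ltac:(lra)) as [k [Ck [ka [kx1 Gk]]]].
  rewrite Rmin_left, Rmax_right in Ck, Gk by lra.
  assert (Cf1 : continuous_on_cc f a x1) by (apply (cont_restr f a b); [assumption|lra|lra]).
  assert (Ch1 : continuous_on_cc h a x1) by (apply (cont_restr h a b); [assumption|lra|lra]).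
  assert (Ch2 : continuous_on_cc h x1 b) by (apply (cont_restr h a b); [assumption|lra|lra]).
  destruct (Rlt_or_le u (h a)) as [Lt|Ge].
  -
    assert (Below : forall t, a <= t <= x1 -> f t < h t).
    { intros t Ht. destruct (Near t Ht) as [_ [N1 N2]].
      assert (Ee : e = (h a - u) / 2) by (unfold e; rewrite Rabs_right; lra).
      pose proof (Rle_abs (f t - u)). pose proof (Rabs_maj2_ (h t - h a)). lra. }
    set (g1 := fun t => Rmax (f t) (Rmin (k t) (h t))).
    set (G := fun t => if Rle_dec t x1 then g1 t else h t).
    assert (g1x : g1 x1 = h x1).
    { unfold g1. rewrite kx1, Rmin_left by lra. apply Rmax_right.
      pose proof (Below x1 ltac:(lra)); lra. }
    assert (g1b : forall t, a <= t <= x1 -> f t <= g1 t <= h t).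
    { intros t Ht. unfold g1. split. apply Rmax_l. apply Rmax_lub.
      pose proof (Below t Ht); lra. apply Rmin_r. }
    exists G, x1. split; [lra|split;[lra|split;[|split;[|split;[|split]]]]].
    + intros t Ht. unfold G. dRle; auto. replace t with x1 by lra. auto.
    + apply cont_glue; auto; try lra. apply cont_max; auto. apply cont_min; auto.
    + intros x Hx. unfold G. dRle. 
      * apply (inJ_between c d (f x) (h x));
          [apply (proj1 (Near x ltac:(lra))) | apply hJ; lra | apply g1b; lra].
      * apply hJ; lra.
    + intros x Hx. unfold G. dRle; [|apply hg; lra].
      unfold g1. apply P_max. apply Gf; lra. apply P_min. apply Gk; lra. apply hg; lra.
    + unfold G. dRle; try lra. unfold g1. rewrite fa, ka, Rmin_left by lra.
      apply Rmax_left; lra.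
  -
    assert (Above : forall t, a <= t <= x1 -> h t < f t).
    { intros t Ht. destruct (Near t Ht) as [_ [N1 N2]].
      assert (h a < u) by lra.
      assert (Ee : e = (u - h a) / 2) by (unfold e; rewrite Rabs_left; lra).
      pose proof (Rabs_maj2_ (f t - u)). pose proof (Rle_abs (h t - h a)). lra. }
    set (g1 := fun t => Rmin (f t) (Rmax (k t) (h t))).
    set (G := fun t => if Rle_dec t x1 then g1 t else h t).
    assert (g1x : g1 x1 = h x1).
    { unfold g1. rewrite kx1, Rmax_left by lra. apply Rmin_right.
      pose proof (Above x1 ltac:(lra)); lra. }
    assert (g1b : forall t, a <= t <= x1 -> h t <= g1 t <= f t).
    { intros t Ht. unfold g1. split. apply Rmin_glb.
      pose proof (Above t Ht); lra. apply Rmax_r. apply Rmin_l. }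
    exists G, x1. split; [lra|split;[lra|split;[|split;[|split;[|split]]]]].
    + intros t Ht. unfold G. dRle; auto. replace t with x1 by lra. auto.
    + apply cont_glue; auto; try lra. apply cont_min; auto. apply cont_max; auto.
    + intros x Hx. unfold G. dRle. 
      * apply (inJ_between c d (h x) (f x));
          [apply hJ; lra | apply (proj1 (Near x ltac:(lra))) | apply g1b; lra].
      * apply hJ; lra.
    + intros x Hx. unfold G. dRle; [|apply hg; lra].
      unfold g1. apply P_min. apply Gf; lra. apply P_max. apply Gk; lra. apply hg; lra.
    + unfold G. dRle; try lra. unfold g1. rewrite fa, ka, Rmax_left by lra.
      apply Rmin_left; lra.
Qed.

Theorem lemma4p3 (a b : R) (H : R -> R -> Prop) (h : R -> R) (u v : R)
  (hab : a < b)
  (hH : functionally_connected H)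
  (hpr : forall x, a <= x <= b -> pr1 H x)
  (hcont : continuous_on_cc h a b)
  (hgraph : graph_in h a b H)
  (hu : H a u) (hv : H b v) :
  forall c d : Rbar,
    in_open_interval c d u -> in_open_interval c d v ->
    (forall x, a <= x <= b -> in_open_interval c d (h x)) ->
    exists g : R -> R,
      continuous_on_cc g a b /\
      (forall x, a <= x <= b -> in_open_interval c d (g x)) /\
      graph_in g a b H /\ g a = u /\ g b = v.
Proof.
  intros c d uJ vJ hJ.
  destruct (step a b H h u c d hab hH hcont hgraph hJ hu uJ)
    as [G1 [x1 [_ [_ [_ [C1 [J1 [Gr1 E1]]]]]]]].
  assert (hv' : H (- - b) v) by (rewrite Ropp_involutive; exact hv).
  destruct (step (- b) (- a) (fun x y => H (- x) y) (fun x => G1 (- x)) v c d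
              ltac:(lra) (fc_refl H hH) (cont_refl _ _ _ C1)
              ltac:(intros x Hx; apply Gr1; lra)
              ltac:(intros x Hx; apply J1; lra) hv' vJ)
    as [G2 [y1 [Hy1 [Hy1' [Eq2 [C2 [J2 [Gr2 E2]]]]]]]].
  exists (fun t => G2 (- t)). split; [|split; [|split; [|split]]].
  - pose proof (cont_refl _ _ _ C2) as C. rewrite !Ropp_involutive in C. exact C.
  - intros x Hx; apply J2; lra.
  - intros x Hx. pose proof (Gr2 (- x) ltac:(lra)) as P. simpl in P.
    rewrite Ropp_involutive in P. exact P.
  - rewrite (Eq2 (- a) ltac:(lra)). rewrite Ropp_involutive. exact E1.
  - exact E2.
Qed.
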